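(* There exist a finitely generated, residually finite group $G$ and an endomorphism $\Phi : G \to G$ such that for every $n \geq 0$, the restriction of $\Phi$ to $\Phi^n(G)$ is not injective. *)

(* Defs.v *)
(* abstract (possibly infinite) groups are given as an explicit
   record; finite quotients for residual finiteness are MathComp finGroupTypes. *)
From mathcomp Require Import all_boot all_fingroup.
From Stdlib Require List.

Set Implicit Arguments.
Unset Strict Implicit.
Unset Printing Implicit Defensive.

Record AbsGroup := {
  carrier :> Type;
  gmul : carrier -> carrier -> carrier;
  ginv : carrier -> carrier;
  gone : carrier;
  gmulA : forall x y z, gmul x (gmul y z) = gmul (gmul x y) z;
  gmul1 : forall x, gmul gone x = x;
  gmulV : forall x, gmul (ginv x) x = gone
}.

Inductive in_gen (G : AbsGroup) (S : list G) : G -> Prop :=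
  | gen_base x : List.In x S -> in_gen S x
  | gen_one : in_gen S (gone G)
  | gen_mul x y : in_gen S x -> in_gen S y -> in_gen S (gmul x y)
  | gen_inv x : in_gen S x -> in_gen S (ginv x).

Definition finitely_generated (G : AbsGroup) : Prop :=
  exists S : list G, forall x : G, in_gen S x.

Definition residually_finite (G : AbsGroup) : Prop :=
  forall g : G, g <> gone G ->
    exists (H : finGroupType) (f : G -> H),
      (forall x y : G, f (gmul x y) = (f x * f y)%g) /\ f g <> 1%g.

Definition is_endomorphism (G : AbsGroup) (phi : G -> G) : Prop :=
  forall x y : G, phi (gmul x y) = gmul (phi x) (phi y).

Definition image_iter (G : AbsGroup) (phi : G -> G) (n : nat) (y : G) : Prop :=
  exists x : G, y = iter n phi x.

(* Main.v *)
Require Import Defs.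
From mathcomp Require Import all_boot all_fingroup.
From HB Require Import structures.
From mathcomp Require Import ssralg zmodp.
From Stdlib Require Import FunctionalExtensionality ProofIrrelevance Classical.
Set Implicit Arguments. Unset Strict Implicit. Unset Printing Implicit Defensive.
Local Open Scope group_scope.

Section Wr.
Variable H : finGroupType.
Definition wr := ({ffun H -> bool} * H)%type.
HB.instance Definition _ := Finite.on wr.
Definition wmul (x y : wr) : wr :=
  ([ffun h => x.1 h (+) y.1 (x.2^-1 * h)], x.2 * y.2).
Definition wone : wr := ([ffun _ => false], 1).
Definition winv (x : wr) : wr := ([ffun h => x.1 (x.2 * h)], x.2^-1).
Lemma wmulA : associative wmul.
Proof.
move=> [f1 g1] [f2 g2] [f3 g3]; rewrite /wmul /=; congr pair; last by rewrite mulgA.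
by apply/ffunP => h; rewrite !ffunE /= addbA invMg mulgA.
Qed.
Lemma wmul1 : left_id wone wmul.
Proof. move=> [f g]; rewrite /wmul /=; congr pair; last by rewrite mul1g.
by apply/ffunP => h; rewrite !ffunE /= invg1 mul1g. Qed.
Lemma wmulV : left_inverse wone winv wmul.
Proof. move=> [f g]; rewrite /wmul /=; congr pair; last by rewrite mulVg.
by apply/ffunP => h; rewrite !ffunE /= invgK addbb. Qed.
HB.instance Definition _ := Finite_isGroup.Build wr wmulA wmul1 wmulV.
Lemma wmulE (x y : wr) : x * y = wmul x y. Proof. by []. Qed.
Lemma winvE (x : wr) : x^-1 = winv x. Proof. by []. Qed.
Lemma woneE : (1 : wr) = wone. Proof. by []. Qed.

Definition z0 : {ffun H -> bool} := [ffun _ => false].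
Definition dl (x : H) : {ffun H -> bool} := [ffun y => y == x].
Definition tog (b : {ffun H -> bool}) p : {ffun H -> bool} := [ffun h => b h (+) (h == p)].

Lemma zmul (x y : H) : ((z0, x) : wr) * ((z0, y) : wr) = ((z0, x * y) : wr).
Proof. rewrite wmulE /wmul /=; congr pair; apply/ffunP => h; by rewrite !ffunE. Qed.
Lemma zinv (x : H) : ((z0, x) : wr)^-1 = ((z0, x^-1) : wr).
Proof. rewrite winvE /winv /=; congr pair; apply/ffunP => h; by rewrite !ffunE. Qed.
Lemma zpow (x : H) j : ((z0, x) : wr) ^+ j = ((z0, x ^+ j) : wr).
Proof. elim: j => [|j IH]; first by rewrite !expg0.
by rewrite !expgS IH zmul. Qed.
Lemma zconj (h : H) : ((z0, h) : wr) * ((dl 1, 1) : wr) * ((z0, h) : wr)^-1 = ((dl h, 1) : wr).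
Proof. rewrite zinv !wmulE /wmul /=; congr pair; first last. by rewrite mulg1 mulgV.
apply/ffunP => y; rewrite !ffunE /=. idtac.
by rewrite addbF -(inj_eq (mulgI h)) mulKVg mulg1.
Qed.
Lemma bmul (f1 f2 : {ffun H -> bool}) : ((f1, 1) : wr) * ((f2, 1) : wr) = (([ffun h => f1 h (+) f2 h], 1) : wr).
Proof. rewrite wmulE /wmul /=; congr pair; last by rewrite mulg1.
apply/ffunP => y; by rewrite !ffunE /= invg1 mul1g. Qed.

Lemma togK b p : tog (tog b p) p = b.
Proof. apply/ffunP => h; by rewrite !ffunE -addbA addbb addbF. Qed.
Lemma togC b p q : tog (tog b p) q = tog (tog b q) p.
Proof. apply/ffunP => h; by rewrite !ffunE -!addbA (addbC (h == p)). Qed.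
Lemma tog_eq b p c : (tog b p == c) = (b == tog c p).
Proof. apply/eqP/eqP => [<-|->]; by rewrite togK. Qed.
Lemma tog_z0 p : tog z0 p = dl p.
Proof. apply/ffunP => h; by rewrite !ffunE. Qed.
Lemma tog_dl p : tog (dl p) p = z0.
Proof. apply/ffunP => h; by rewrite !ffunE addbb. Qed.

Definition rho (u v : H) (F : {ffun H -> bool}) : {ffun H -> bool} :=
  [ffun x => F (x * u) (+) F (x * v)].
Definition Phi u v (x : wr) : wr := (rho u v x.1, x.2).
Lemma Phi_mul u v x y : Phi u v (x * y) = Phi u v x * Phi u v y.
Proof.
case: x y => [f1 g1] [f2 g2]; rewrite !wmulE /wmul /Phi /=; congr pair.
apply/ffunP => h; rewrite !ffunE /= !mulgA.
by rewrite -!addbA (addbCA (f2 _)).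
Qed.
Lemma rho_z0 u v : rho u v z0 = z0.
Proof. apply/ffunP => h; by rewrite !ffunE. Qed.
Lemma Phi1 u v : Phi u v 1 = 1.
Proof. by rewrite woneE /wone /Phi /= -/z0 rho_z0. Qed.
Lemma Phi_inv u v x : Phi u v x^-1 = (Phi u v x)^-1.
Proof.
apply: (mulgI (Phi u v x)); rewrite mulgV -Phi_mul.
by rewrite mulgV Phi1.
Qed.
Lemma iter_Phi u v n F g : iter n (Phi u v) ((F, g) : wr) = ((iter n (rho u v) F, g) : wr).
Proof. elim: n => [|n IH] //=; by rewrite IH. Qed.
End Wr.
Lemma invg1' (K : finGroupType) : (1 : K)^-1 = 1.
Proof. by rewrite -{2}(mulVg (1:K)) mulg1. Qed.


Section Lamp.
Variable K : finGroupType.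
Variable g0 : K.
Definition L := wr K.
Definition tL : L := (z0 K, g0).
Definition aL : L := (dl 1, 1).
Definition uL : L := tL^-1.
Definition vL : L := aL^-1 * tL^-1.
Definition rhoL := rho uL vL.

Lemma mul_uL b k : ((b, k) : L) * uL = ((b, k * g0^-1) : L).
Proof. rewrite /uL /tL zinv wmulE /wmul /=; congr pair; apply/ffunP=> h; by rewrite !ffunE addbF. Qed.
Lemma mul_vL b k : ((b, k) : L) * vL = ((tog b k, k * g0^-1) : L).
Proof. rewrite /vL /tL zinv /aL !winvE /winv !wmulE /wmul /=; congr pair.
  apply/ffunP=> h; rewrite !ffunE /= addbF mul1g. by rewrite -(inj_eq (mulgI k)) mulKVg mulg1.
  by rewrite invg1' mul1g.
Qed.
Lemma rhoLE (F : {ffun L -> bool}) b k :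
  rhoL F ((b, k) : L) = F ((b, k * g0^-1) : L) (+) F ((tog b k, k * g0^-1) : L).
Proof. by rewrite /rhoL /rho ffunE mul_uL mul_vL. Qed.

Definition Inv d (F : {ffun L -> bool}) :=
  forall b k, F ((tog b (k * g0 ^+ d), k) : L) = F ((b, k) : L).

Lemma inv_step e F : Inv e.+1 F -> Inv e (rhoL F).
Proof.
move=> HF b k; rewrite !rhoLE.
have -> : k * g0 ^+ e = (k * g0^-1) * g0 ^+ e.+1 by rewrite expgS mulgA mulgKV.
by rewrite HF togC HF.
Qed.
Lemma inv_zero F : Inv 1 F -> rhoL F = z0 L.
Proof.
move=> HF; apply/ffunP => [[b k]]; rewrite rhoLE ffunE.
move: (HF b (k * g0^-1)); rewrite expg1 mulgKV => ->.
by rewrite addbb.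
Qed.
Lemma inv_iter d F : Inv d.+1 F -> iter d.+1 rhoL F = z0 L.
Proof.
elim: d F => [|d IH] F HF; first exact: inv_zero.
by rewrite iterSr IH //; apply: inv_step.
Qed.

Definition ap n : L := (dl (g0 ^+ n.+1), 1).
Definition Fn n : {ffun L -> bool} := [ffun x => (x == 1) (+) (x == ap n)].

Lemma pair_eq1 (b : {ffun K -> bool}) k : (((b, k) : L) == 1) = (b == z0 K) && (k == 1).
Proof. by []. Qed.

Lemma Fn_inv n : Inv n.+1 (Fn n).
Proof.
move=> b k; rewrite !ffunE /ap /= !xpair_eqE.
case: (eqVneq k 1) => [->|nk]; last by rewrite !andbF.
rewrite !andbT mul1g tog_eq tog_eq tog_z0 tog_dl.
by rewrite addbC.
Qed.

Lemma Fn_vanish n : iter n.+1 rhoL (Fn n) = z0 L.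
Proof. apply: inv_iter; exact: Fn_inv. Qed.
End Lamp.


Section Form.
Variable K : finGroupType.
Variable g0 : K.

Definition Zs (S : pred K) (b : {ffun K -> bool}) := [forall h, b h ==> S h].

Lemma Zstep (S : pred K) q c : ~~ S q ->
  Zs S c (+) Zs S (tog c q) = Zs (fun x => S x || (x == q)) c.
Proof.
move=> nSq; rewrite /Zs.
case cq: (c q).
- have -> : [forall h, c h ==> S h] = false.
    apply/negbTE/negP => /forallP /(_ q); by rewrite cq (negbTE nSq).
  rewrite /=; apply/forallP/forallP => H h /=.
    case: (eqVneq h q) => [->|hq]; first by rewrite orbT implybT.
    by move: (H h); rewrite ffunE (negbTE hq) addbF orbF.
  rewrite ffunE; case: (eqVneq h q) => [->|hq]; first by rewrite cq.
  by rewrite addbF; move: (H h); rewrite /= (negbTE hq) orbF.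
- have -> : [forall h, tog c q h ==> S h] = false.
    apply/negbTE/negP => /forallP /(_ q); by rewrite ffunE cq eqxx (negbTE nSq).
  rewrite addbF; apply/forallP/forallP => H h /=.
    by apply/implyP => /(implyP (H h)) ->.
  apply/implyP => ch; move: (implyP (H h) ch) => /=; case: (eqVneq h q) => [hq|hq].
    by move: ch; rewrite hq cq.
  by rewrite orbF.
Qed.

Variable n : nat.
Hypothesis Hinj : forall i j, i <= n.+1 -> j <= n.+1 -> g0 ^+ i = g0 ^+ j -> i = j.

Definition Si i : pred K := fun x => has (fun j => x == g0 ^+ j) (iota 1 i).
Lemma SiS i x : Si i.+1 x = Si i x || (x == g0 ^+ i.+1).
Proof. by rewrite /Si -[i.+1]addn1 iotaD has_cat /= orbF addnC. Qed.
Lemma notSi i j : i < j <= n.+1 -> ~~ Si i (g0 ^+ j).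
Proof.
move=> /andP [ij jn]; apply/hasPn => k; rewrite mem_iota => /andP [k1 ki].
apply/negP => /eqP /Hinj E.
have: j = k by apply: E => //; apply: leq_trans jn; rewrite add1n in ki; apply: ltnW; apply: leq_trans ki ij.
move=> jk; move: ki; rewrite add1n -jk => ji; move: (leq_trans ji ij); by rewrite ltnn.
Qed.

Definition pn := g0 ^+ n.+1.
Definition Gf i : {ffun L K -> bool} :=
  [ffun x : L K => (x.2 == g0 ^+ i) && (Zs (Si i) x.1 (+) Zs (Si i) (tog x.1 pn))].

Lemma Gf0 : Gf 0 = Fn g0 n.
Proof.
apply/ffunP => [[b k]]; rewrite !ffunE /ap /= !xpair_eqE expg0.
case: (eqVneq k 1) => [_|nk]; last by rewrite !andbF.
rewrite !andbT /Zs.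
have E : forall c : {ffun K -> bool}, [forall h, c h ==> Si 0 h] = (c == z0 K).
  move=> c; apply/forallP/eqP => [H|->]; last by move=> h; rewrite ffunE.
  apply/ffunP => h; rewrite ffunE; move: (H h); by case: (c h).
by rewrite !E tog_eq tog_z0.
Qed.

Lemma Gf_step i : i < n -> rhoL g0 (Gf i) = Gf i.+1.
Proof.
move=> lin; apply/ffunP => [[b k]]; rewrite rhoLE !ffunE /=.
have Ek : (k * g0^-1 == g0 ^+ i) = (k == g0 ^+ i.+1).
  by rewrite -(inj_eq (mulIg g0)) mulgKV expgSr.
rewrite Ek; case: (eqVneq k (g0 ^+ i.+1)) => [->|]; last by [].
rewrite /=.
have nS : ~~ Si i (g0 ^+ i.+1) by apply: notSi; rewrite ltnSn /=; apply: leq_trans lin _; exact: leqW.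
rewrite togC.
have E : forall c : {ffun K -> bool}, Zs (Si i) c (+) Zs (Si i) (tog c (g0 ^+ i.+1)) = Zs (Si i.+1) c.
  move=> c; rewrite Zstep //; rewrite /Zs; apply: eq_forallb => h; by rewrite SiS.
rewrite -E -(E (tog b pn)).
by case: (Zs _ b); case: (Zs _ (tog b pn)); case: (Zs _ (tog b _)); case: (Zs _ (tog (tog b _) _)).
Qed.

Lemma Gf_iter i : i <= n -> iter i (rhoL g0) (Fn g0 n) = Gf i.
Proof.
elim: i => [|i IH] lin; first by rewrite Gf0.
by rewrite iterS IH ?Gf_step // ltnW.
Qed.

Lemma Fn_nonvanish : iter n (rhoL g0) (Fn g0 n) ((z0 K, g0 ^+ n) : L K) = true.
Proof.
rewrite Gf_iter // ffunE /= eqxx /=.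
have -> : Zs (Si n) (z0 K) = true by apply/forallP => h; rewrite ffunE.
rewrite tog_z0.
have -> : Zs (Si n) (dl pn) = false.
  apply/negbTE/forallP => /(_ pn); rewrite ffunE eqxx /=.
  by apply/negP; apply: notSi; rewrite ltnSn /=.
by [].
Qed.
End Form.


Section Coord.
Variable K : finGroupType.
Variable g0 : K.
Definition GM := wr (L K).
Definition TM : GM := (z0 _, tL g0).
Definition AM : GM := (z0 _, aL K).
Definition CM : GM := (dl 1, 1).
Definition PhiM : GM -> GM := Phi (uL g0) (vL g0).

Lemma PhiM_z x : PhiM ((z0 _, x) : GM) = ((z0 _, x) : GM).
Proof. by rewrite /PhiM /Phi /= rho_z0. Qed.
Lemma eq_mul1 (G : finGroupType) (x y : G) : (x * y == 1) = (x == y^-1).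
Proof. by rewrite [RHS]eq_mulgV1 invgK. Qed.
Lemma PhiM_C : PhiM CM = TM * CM * TM^-1 * ((TM * AM) * CM * (TM * AM)^-1).
Proof.
rewrite /TM /AM /CM zmul !zconj bmul /PhiM /Phi /=; congr pair.
apply/ffunP => x; rewrite !ffunE !eq_mul1 /uL /vL invMg !invgK.
by [].
Qed.
Lemma kM n : CM * ((TM ^+ n.+1 * AM * (TM ^+ n.+1)^-1) * CM * (TM ^+ n.+1 * AM * (TM ^+ n.+1)^-1)^-1)
   = ((Fn g0 n, 1) : GM).
Proof.
rewrite /TM /AM /CM zpow zinv !zmul /tL zpow /aL zconj zconj bmul; congr pair.
by apply/ffunP => x; rewrite !ffunE.
Qed.
End Coord.


Definition KK (M : nat) : finGroupType := 'I_M.+1.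
Definition U := forall M : nat, GM (KK M).
Definition umul (x y : U) : U := fun M => x M * y M.
Definition uinv (x : U) : U := fun M => (x M)^-1.
Definition uone : U := fun M => 1.
Definition Tu : U := fun M => TM (K:=KK M) (@Zp1 M).
Definition Au : U := fun M => AM (KK M).
Definition Cu : U := fun M => CM (KK M).
Definition PhiU (x : U) : U := fun M => PhiM (K:=KK M) (@Zp1 M) (x M).

Inductive gen : U -> Prop :=
 | gT : gen Tu | gA : gen Au | gC : gen Cu | g1 : gen uone
 | gm x y : gen x -> gen y -> gen (umul x y)
 | gi x : gen x -> gen (uinv x).

Definition Gc := {x : U | gen x}.
Lemma sig_eq (x y : Gc) : proj1_sig x = proj1_sig y -> x = y.
Proof. case: x y => [x px] [y py] /= E; subst y; by rewrite (proof_irrelevance _ px py). Qed.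

Definition Gmul (x y : Gc) : Gc := exist _ (umul (proj1_sig x) (proj1_sig y)) (gm (proj2_sig x) (proj2_sig y)).
Definition Ginv (x : Gc) : Gc := exist _ (uinv (proj1_sig x)) (gi (proj2_sig x)).
Definition Gone : Gc := exist _ uone g1.

Lemma GmulA x y z : Gmul x (Gmul y z) = Gmul (Gmul x y) z.
Proof. apply: sig_eq; apply: functional_extensionality_dep => M /=; by rewrite /umul mulgA. Qed.
Lemma Gmul1 x : Gmul Gone x = x.
Proof. apply: sig_eq; apply: functional_extensionality_dep => M /=; by rewrite /umul /uone mul1g. Qed.
Lemma GmulV x : Gmul (Ginv x) x = Gone.
Proof. apply: sig_eq; apply: functional_extensionality_dep => M /=; by rewrite /umul /uinv /uone mulVg. Qed.

Definition GG : AbsGroup := Build_AbsGroup GmulA Gmul1 GmulV.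

Lemma gen_Phi x : gen x -> gen (PhiU x).
Proof.
elim => {x} [| | | |x y _ IHx _ IHy|x _ IH].
- have -> : PhiU Tu = Tu by apply: functional_extensionality_dep => M; exact: PhiM_z.
  exact: gT.
- have -> : PhiU Au = Au by apply: functional_extensionality_dep => M; exact: PhiM_z.
  exact: gA.
- have -> : PhiU Cu = umul (umul (umul Tu Cu) (uinv Tu))
     (umul (umul (umul Tu Au) Cu) (uinv (umul Tu Au))).
    by apply: functional_extensionality_dep => M; exact: PhiM_C.
  by repeat constructor.
- have -> : PhiU uone = uone by apply: functional_extensionality_dep => M; exact: Phi1.
  exact: g1.
- have -> : PhiU (umul x y) = umul (PhiU x) (PhiU y).
    by apply: functional_extensionality_dep => M; exact: Phi_mul.
  exact: gm.
- have -> : PhiU (uinv x) = uinv (PhiU x).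
    by apply: functional_extensionality_dep => M; exact: Phi_inv.
  exact: gi.
Qed.

Definition phiG (x : GG) : GG := exist _ (PhiU (proj1_sig x)) (gen_Phi (proj2_sig x)).

Lemma iter_phiG n (x : GG) M : proj1_sig (iter n phiG x) M = iter n (PhiM (K:=KK M) (@Zp1 M)) (proj1_sig x M).
Proof. elim: n => [|n IH] //=; by rewrite /phiG /= /PhiU IH. Qed.

Lemma iter_Phi1 (H : finGroupType) (u v : H) n : iter n (Phi u v) 1 = 1.
Proof. elim: n => [|n IH] //=; by rewrite IH Phi1. Qed.

Definition upow (x : U) j : U := fun M => x M ^+ j.
Lemma gen_pow x j : gen x -> gen (upow x j).
Proof.
move=> gx; elim: j => [|j IH].
  have -> : upow x 0 = uone by apply: functional_extensionality_dep => M; rewrite /upow expg0.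
  exact: g1.
have -> : upow x j.+1 = umul x (upow x j) by apply: functional_extensionality_dep => M; rewrite /upow expgS.
exact: gm.
Qed.

Definition Apn n : U := umul (umul (upow Tu n.+1) Au) (uinv (upow Tu n.+1)).
Definition kU n : U := umul Cu (umul (umul (Apn n) Cu) (uinv (Apn n))).
Lemma gen_kU n : gen (kU n).
Proof. have := gen_pow n.+1 gT; move=> h. repeat (constructor || assumption). Qed.

Lemma kU_M n M : kU n M = ((Fn (@Zp1 M) n, 1) : GM (KK M)).
Proof. exact: kM. Qed.

Lemma Zp_inj n : forall i j, i <= n.+1 -> j <= n.+1 ->
   (@Zp1 n.+1) ^+ i = (@Zp1 n.+1) ^+ j -> i = j.
Proof.
move=> i j hi hj; rewrite !Zp_expg => /(congr1 val) /=.
by rewrite !modn_small ?mul1n // ltnS.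
Qed.

Theorem theorem2 :
  exists (G : AbsGroup) (phi : G -> G),
    finitely_generated G /\ residually_finite G /\ is_endomorphism phi /\
    forall n : nat,
      exists a b : G, image_iter phi n a /\ image_iter phi n b /\
                      a <> b /\ phi a = phi b.
Proof.
exists GG, phiG; split; [|split; [|split]].
- pose S : list GG := [:: exist _ Tu gT; exist _ Au gA; exist _ Cu gC].
  exists S; case => x px.
  suff: forall y, gen y -> forall py : gen y, in_gen S (exist gen y py) by apply.
  move=> y; elim => {y} [| | | |y w py IHy pw IHw|y py IH] q.
  + by rewrite (proof_irrelevance _ q gT); apply: gen_base; left.
  + by rewrite (proof_irrelevance _ q gA); apply: gen_base; right; left.
  + by rewrite (proof_irrelevance _ q gC); apply: gen_base; right; right; left.
  + have -> : exist gen uone q = gone GG by apply: sig_eq.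
    exact: gen_one.
  + have -> : exist gen (umul y w) q = @gmul GG (exist gen y py) (exist gen w pw) by apply: sig_eq.
    exact: gen_mul.
  + have -> : exist gen (uinv y) q = @ginv GG (exist gen y py) by apply: sig_eq.
    exact: gen_inv.
- move=> g ng.
  have [M HM] : exists M, proj1_sig g M <> 1.
    apply: not_all_ex_not => H; apply: ng; apply: sig_eq.
    by apply: functional_extensionality_dep => M; rewrite H.
  exists (GM (KK M)), (fun x : GG => proj1_sig x M); split; [by move=> x y | exact: HM].
- move=> x y; apply: sig_eq; apply: functional_extensionality_dep => M; exact: Phi_mul.
- move=> n.
  pose k : GG := exist _ (kU n) (gen_kU n).
  exists (iter n phiG k), (iter n phiG (gone GG)).
  split; first by exists k.
  split; first by exists (gone GG).
  split.
  + move=> /(congr1 (fun x : GG => proj1_sig x n.+1)).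
    rewrite !iter_phiG /= kU_M /uone iter_Phi1 /PhiM iter_Phi => /(congr1 fst) /= E.
    have := Fn_nonvanish (Zp_inj (n:=n)).
    by rewrite /rhoL E ffunE.
  + apply: sig_eq; apply: functional_extensionality_dep => M.
    rewrite /phiG /= /PhiU !iter_phiG /= kU_M /uone iter_Phi1 /PhiM iter_Phi Phi1 /=.
    rewrite /Phi /=; have E := Fn_vanish (@Zp1 M) n; rewrite /= /rhoL in E; by rewrite E.
Qed.
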